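(* Let $q$ be a prime power, $n\ge1$, and let $C=\langle B_r\rangle\oplus\langle B_t\rangle\subseteq\mathbb{F}_q^n$ be an $\mathbb{F}_q$-linear code, where $B_r$ ($r\times n$) and $B_t$ ($t\times n$) are matrices over $\mathbb{F}_q$ with linearly independent rows, such that $\langle B_t\rangle\subseteq C^{\perp_e}$ and $t=\dim\langle B_t\rangle\ge 2$. Let $A$ be an invertible $t\times t$ matrix over $\mathbb{F}_q$ with no eigenvalue in $\mathbb{F}_q$. Let $c=\mathrm{rank}(HH^T)=\dim C-\dim(C\cap C^{\perp_e})$, where $H$ is any generator matrix of $C$ (the number of maximally entangled states of the EAQECC determined by $C$). Then $D_A$ gives rise to an EAQECC with parameters $[[n,\,n-2r-t+c,\,d';\,c]]_q$, i.e. $c(D_A)=c$, $k(D_A)=n-2r-t+c$, and $d'=d(D_A)\ge\min\left\{\delta_1,\left\lceil\left(1+\frac1q\right)\delta_2\right\rceil\right\}$, where $\delta_1=d_H(C^{\perp_e})$ and $\delta_2=d_H(\langle B_r\rangle^{\perp_e})$.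
   Context: $\mathbb{F}_q$ is the finite field with $q$ elements. $x\cdot_e y=\sum_i x_iy_i$ on $\mathbb{F}_q^n$; $V^{\perp_e}$ is the Euclidean dual; $\langle B\rangle$ is the row space of a matrix $B$; $d_H(V)$ is the minimum Hamming weight of a nonzero vector of $V$. On $\mathbb{F}_q^{2n}$, $(x|y)\cdot_s(z|w)=x\cdot_e w-z\cdot_e y$ and $D^{\perp_s}$ is the symplectic dual. The symplectic weight of $(x|y)$ is $\#\{j:(x_j,y_j)\neq(0,0)\}$; $d_s(S)$ is the minimum symplectic weight of a nonzero element of $S$. For a linear code $D\subseteq\mathbb{F}_q^{2n}$: $c(D)=\frac12(\dim D-\dim(D\cap D^{\perp_s}))$, $k(D)=n-\dim D+c(D)$, $d(D)=d_s(D^{\perp_s}\setminus(D\cap D^{\perp_s}))$; $D$ gives rise to an EAQECC with parameters $[[n,k(D),d(D);c(D)]]_q$. $D_A\subseteq\mathbb{F}_q^{2n}$ is the code generated by the rows of $\begin{pmatrix}B_t & AB_t\\ B_r & 0\\ 0 & B_r\end{pmatrix}$. *)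

(* Defs.v *)
From HB Require Import structures.
From mathcomp Require Import all_boot all_order all_algebra all_field.
Set Implicit Arguments. Unset Strict Implicit. Unset Printing Implicit Defensive.
Import GRing.Theory.
Local Open Scope ring_scope.

(* Codes are represented as row spaces of matrices (mxalgebra, %MS). *)
Section CodeDefs.
Variable F : finFieldType.

Definition edual m n (M : 'M[F]_(m, n)) : 'M[F]_n := kermx M^T.

(* Hamming weight and minimum Hamming distance d_H(<M>).
   The default value n of the min is irrelevant for nonempty index sets
   since all weights are <= n. *)
Definition hwt n (v : 'rV[F]_n) : nat := #|[set j : 'I_n | v 0 j != 0]|.
Definition dH m n (M : 'M[F]_(m, n)) : nat :=
  \big[minn/n]_(v : 'rV[F]_n | (v <= M)%MS && (v != 0)) hwt v.

(* Vectors of F^{2n} are 'rV_(n + n), written (x|y) with x = lsubmx, y = rsubmx. *)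
Definition symp_form n (u v : 'rV[F]_(n + n)) : F :=
  (lsubmx u *m (rsubmx v)^T - lsubmx v *m (rsubmx u)^T) 0 0.

(* Symplectic dual of <M>: {v | forall rows u of M, u .s v = 0}.
   For v = (z|w) and a row u = (x|y) of M,
   v *m col_mx (rsubmx M)^T (-(lsubmx M)^T) has entry z.y - w.x = -(u .s v). *)
Definition sdual m n (M : 'M[F]_(m, n + n)) : 'M[F]_(n + n) :=
  kermx (col_mx (rsubmx M)^T (- (lsubmx M)^T)).

Definition swt n (v : 'rV[F]_(n + n)) : nat :=
  #|[set j : 'I_n | (lsubmx v 0 j != 0) || (rsubmx v 0 j != 0)]|.

Definition cEA m n (M : 'M[F]_(m, n + n)) : nat :=
  (\rank M - \rank (M :&: sdual M)%MS)./2.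
Definition kEA m n (M : 'M[F]_(m, n + n)) : int :=
  (n%:Z - (\rank M)%:Z + (cEA M)%:Z)%R.

Definition ent_c m n (H : 'M[F]_(m, n)) : nat :=
  \rank H - \rank (H :&: edual H)%MS.

Definition DA n r t (Br : 'M[F]_(r, n)) (Bt : 'M[F]_(t, n)) (A : 'M[F]_t)
  : 'M[F]_(t + (r + r), n + n) :=
  col_mx (row_mx Bt (A *m Bt)) (col_mx (row_mx Br 0) (row_mx 0 Br)).

End CodeDefs.

Definition ceil_div (a b : nat) : nat := (a + b - 1) %/ b.

(* Main.v *)
Require Import Defs.
From HB Require Import structures.
From mathcomp Require Import all_boot all_order all_algebra all_field.
Import GRing.Theory.
Local Open Scope ring_scope.

From mathcomp Require Import zify.
Set Implicit Arguments. Unset Strict Implicit.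
Lemma row_mx_eq0 (F : fieldType) m n1 n2 (A1 : 'M[F]_(m, n1)) (A2 : 'M[F]_(m, n2)) :
  row_mx A1 A2 = 0 -> A1 = 0 /\ A2 = 0.
Proof. by rewrite -row_mx0 => /eq_row_mx. Qed.

Lemma bigmin_le (T : eqType) (s : seq T) (P : pred T) (Fn : T -> nat) x i0 :
  i0 \in s -> P i0 -> (\big[minn/x]_(i <- s | P i) Fn i <= Fn i0)%N.
Proof.
elim: s => [//|a s IH]; rewrite inE big_cons => /orP[/eqP<- ->|/IH H Pi].
  exact: geq_minl.
case: (P a); last exact: H.
by rewrite geq_min H // orbT.
Qed.

Lemma dH_le (F : finFieldType) m n (M : 'M[F]_(m, n)) v :
  (v <= M)%MS -> v != 0 -> (dH M <= hwt v)%N.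
Proof.
move=> vM v0; rewrite /dH; apply: bigmin_le; first exact: mem_index_enum.
by rewrite vM v0.
Qed.

Lemma gap (F : fieldType) m N p (M : 'M[F]_(m, N)) (K : 'M[F]_(N, p)) :
  (\rank M - \rank (M :&: kermx K) = \rank (M *m K))%N.
Proof. by rewrite -(mxrank_mul_ker M K) addnK. Qed.
Section S.
Variables (F : finFieldType) (n r t : nat) (Br : 'M[F]_(r, n)) (Bt : 'M[F]_(t, n)) (A : 'M[F]_t).
Hypotheses (h1 : Bt *m Bt^T = 0) (h2 : Bt *m Br^T = 0) (h3 : Br *m Bt^T = 0).

Lemma DA_rowE : DA Br Bt A = row_mx (col_mx Bt (col_mx Br 0)) (col_mx (A *m Bt) (col_mx 0 Br)).
Proof. by rewrite /DA -!block_mxEv block_mxEh -block_mxEv block_mxEh. Qed.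

Lemma DK : DA Br Bt A *m col_mx (rsubmx (DA Br Bt A))^T (- (lsubmx (DA Br Bt A))^T)
  = block_mx 0 0 0 (block_mx 0 (Br *m Br^T) (- (Br *m Br^T)) 0).
Proof.
rewrite DA_rowE row_mxKl row_mxKr mul_row_col !tr_col_mx.
rewrite !trmx0 !trmx_mul mulmxN.
rewrite ?(mul_col_row, mul_mx_row, mul_col_mx, mul0mx, mulmx0, trmx0).
rewrite ?mulmxA ?h1 ?h2 ?h3 ?(mul0mx, mulmx0) -?mulmxA ?h1 ?h2 ?h3 ?(mul0mx, mulmx0).
rewrite row_mx0 col_mx0 !opp_block_mx add_block_mx !oppr0 ?addr0 ?add0r ?subr0 ?sub0r ?oppr0.
by rewrite add_block_mx !(addr0, add0r).
Qed.

Lemma rank_swap (G : 'M[F]_r) : \rank (block_mx 0 G (- G) 0) = (2 * \rank G)%N.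
Proof.
have E : block_mx 0 G (- G) 0 = block_mx G 0 0 (- G) *m block_mx 0 1%:M 1%:M 0.
  by rewrite mulmx_block !(mulmx0, mul0mx, mulmx1, addr0, add0r).
have Sf : row_free (block_mx 0 (1%:M : 'M[F]_r) (1%:M : 'M[F]_r) 0).
  rewrite row_free_unit; apply: (proj1 (mulmx1_unit (B := block_mx 0 1%:M 1%:M 0) _)).
  by rewrite mulmx_block !(mulmx0, mul0mx, mulmx1, addr0, add0r) -scalar_mx_block.
by rewrite E mxrankMfree // rank_diag_block_mx mxrank_opp mul2n addnn.
Qed.

Lemma CCt : col_mx Br Bt *m (col_mx Br Bt)^T = block_mx (Br *m Br^T) 0 0 0.
Proof. by rewrite tr_col_mx mul_col_row h1 h2 h3. Qed.

Lemma rank_blk0 m p (X : 'M[F]_(m, p)) a b : \rank (block_mx (0 : 'M[F]_(a, b)) 0 0 X) = \rank X.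
Proof. by rewrite rank_diag_block_mx mxrank0. Qed.
Lemma rank_blk0' m p (X : 'M[F]_(m, p)) a b : \rank (block_mx X 0 0 (0 : 'M[F]_(a, b))) = \rank X.
Proof. by rewrite rank_diag_block_mx mxrank0 addn0. Qed.

End S.
Lemma card_setE (T : finType) (P : pred T) : #|[set j | P j]| = (\sum_j (P j : nat))%N.
Proof.
rewrite -sum1_card big_mkcond /=; apply: eq_bigr => j _; rewrite inE; by case: (P j).
Qed.

Lemma sum_const_F (F : finFieldType) (k : nat) : (\sum_(a : F) k = #|F| * k)%N.
Proof. by rewrite sum_nat_const. Qed.

Lemma count_lemma (F : finFieldType) n (z w : 'rV[F]_n) :
  (hwt z + \sum_(a : F) hwt (w + a *: z) =
   #|F| * #|[set j : 'I_n | ((z 0 j != 0) || (w 0 j != 0))%R]|)%N.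
Proof.
have -> : (\sum_(a : F) hwt (w + a *: z) = \sum_(a : F) \sum_j (((w + a *: z) 0 j != 0)%R : nat))%N.
  by apply: eq_bigr => a _; rewrite /hwt card_setE.
rewrite /hwt !card_setE exchange_big big_distrr -big_split /=.
apply: eq_bigr => j _.
have q0 : (0 < #|F|)%N by apply/card_gt0P; exists (0 : F).
under eq_bigr => a _ do rewrite !mxE.
have [zj0|zjn0] := eqP.
  under eq_bigr => a _ do rewrite zj0 mulr0 addr0.
  by rewrite sum_const_F add0n.
rewrite /=. pose a0 : F := - (w 0 j) / z 0 j.
rewrite (bigD1 a0) //= /a0 divfK; last by apply/eqP.
rewrite subrr eqxx add0n muln1.
rewrite (eq_bigr (fun _ => 1%N)); last first.
  move=> a ha; suff -> : (w 0 j + a * z 0 j != 0)%R by [].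
  apply: contraNneq ha => /eqP h; apply/eqP.
  move: h; rewrite addrC addr_eq0 => /eqP h.
  have zn : (z 0 j != 0)%R by apply/eqP.
  by rewrite /a0 -(mulfK zn a) h.
rewrite sum1dep_card (_ : [set x | x != a0] = [set~ a0]) ?cardsC1 ?add1n ?prednK //.
by apply/setP => x; rewrite !inE.
Qed.
Lemma noeig_row (F : fieldType) t (A : 'M[F]_t) b (al : 'rV_t) :
  ~~ eigenvalue A b -> al *m A^T = b *: al -> al = 0.
Proof.
rewrite /eigenvalue /eigenspace negbK kermx_eq0 => fr E.
have fr' : row_free (A^T - b%:M).
  by rewrite /row_free -[A^T - _]trmxK mxrank_tr linearB /= tr_scalar_mx trmxK.
have : (al <= kermx (A^T - b%:M))%MS by rewrite sub_kermx mulmxBr E mul_mx_scalar subrr.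
have K0 : kermx (A^T - b%:M) = 0 by apply/eqP; rewrite kermx_eq0.
by rewrite K0 submx0 => /eqP.
Qed.

Lemma DA_free (F : finFieldType) n r t (Br : 'M[F]_(r, n)) (Bt : 'M[F]_(t, n)) (A : 'M[F]_t) :
  row_free Br -> row_free Bt -> (Br :&: Bt)%MS = 0 -> row_free (DA Br Bt A).
Proof.
move=> fBr fBt cap0.
rewrite -kermx_eq0; apply/rowV0P => u /sub_kermxP.
rewrite -[u]hsubmxK -[rsubmx u]hsubmxK /DA.
set a := lsubmx u; set b := lsubmx (rsubmx u); set c := rsubmx (rsubmx u).
rewrite !mul_row_col !mul_mx_row !(mulmx0, mul0mx) !add_row_mx -row_mx0.
case/eq_row_mx => e1 e2.
have aB : a *m Bt = 0.
  apply/eqP; rewrite -submx0 -cap0 sub_capmx submxMl andbT.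
  have -> : a *m Bt = (- b) *m Br by rewrite mulNmx; apply/eqP; rewrite -addr_eq0 addr0 in e1 *; rewrite e1.
  exact: submxMl.
have a0 : a = 0 by apply: (row_free_inj fBt); rewrite aB mul0mx.
have b0 : b = 0.
  apply: (row_free_inj fBr); rewrite mul0mx; move: e1; by rewrite aB add0r addr0.
have c0 : c = 0.
  apply: (row_free_inj fBr); rewrite mul0mx; move: e2. by rewrite a0 !mul0mx !add0r.
move: a0 b0 c0; rewrite /a /b /c => -> -> ->; by rewrite !row_mx0.
Qed.

Theorem theorem2p3 (F : finFieldType) (n r t : nat)
    (Br : 'M[F]_(r, n)) (Bt : 'M[F]_(t, n)) (A : 'M[F]_t) :
  (1 <= n)%N -> (2 <= t)%N ->
  row_free Br -> row_free Bt ->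
  (Br :&: Bt)%MS = 0 ->
  (Bt <= edual (col_mx Br Bt))%MS ->
  A \in unitmx ->
  (forall a : F, ~~ eigenvalue A a) ->
  let C := col_mx Br Bt in
  let c := ent_c C in
  let q := #|F| in
  let D := DA Br Bt A in
  [/\ cEA D = c,
      kEA D = (n%:Z - (2 * r)%:Z - t%:Z + c%:Z)%R
    & forall v : 'rV[F]_(n + n),
        (v <= sdual D)%MS -> ~~ (v <= D :&: sdual D)%MS ->
        (minn (dH (edual C)) (ceil_div ((q + 1) * dH (edual Br)) q) <= swt v)%N].
Proof.
move=> n1 t2 fBr fBt cap0 BtC Au noeig C c q D.
have : Bt *m (col_mx Br Bt)^T = 0 by apply/sub_kermxP.
rewrite tr_col_mx mul_mx_row -row_mx0 => /eq_row_mx [h2 h1].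
have h3 : Br *m Bt^T = 0 by rewrite -[Br]trmxK -trmx_mul h2 trmx0.
have cD : cEA D = c.
  rewrite /cEA /c /ent_c /sdual /edual /D /C !gap DK // rank_blk0 rank_swap CCt //.
  by rewrite rank_blk0' mul2n doubleK.
split => //.
  rewrite /kEA cD; have := DA_free A fBr fBt cap0; rewrite /row_free => /eqP ->.
  lia.
move=> v vS vN.
have v0 : v != 0 by apply: contraNneq vN => ->; rewrite sub0mx.
have E : row_mx (lsubmx v) (rsubmx v) *m col_mx (rsubmx D)^T (- (lsubmx D)^T) = 0.
  by rewrite hsubmxK; apply/sub_kermxP.
move: E; rewrite /D DA_rowE row_mxKl row_mxKr mul_row_col !tr_col_mx.
rewrite !trmx0 !trmx_mul mulmxN ?(mul_mx_row, mul0mx, mulmx0, trmx0).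
set z := lsubmx v; set w := rsubmx v.
rewrite !opp_row_mx !add_row_mx => /row_mx_eq0 [e1 /row_mx_eq0 [e2 e3]].
have zBr : z *m Br^T = 0 by move: e3; rewrite subr0.
have wBr : w *m Br^T = 0 by move/eqP: e2; rewrite sub0r oppr_eq0 => /eqP.
have beta : w *m Bt^T = (z *m Bt^T) *m A^T by move/eqP: e1; rewrite subr_eq0 mulmxA => /eqP <-.
set al := z *m Bt^T in beta.
have q0 : (0 < q)%N by apply/card_gt0P; exists (0 : F).
have [al0|/eqP aln0] := eqVneq al 0.
  have zC : (z <= edual C)%MS by rewrite /edual sub_kermx /C tr_col_mx mul_mx_row zBr -/al al0 row_mx0.
  have wC : (w <= edual C)%MS by rewrite /edual sub_kermx /C tr_col_mx mul_mx_row wBr beta al0 mul0mx row_mx0.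
  rewrite geq_min; apply/orP; left.
  have [z0|zn0'] := eqVneq z 0.
    have wn0 : w != 0.
      apply: contraNneq v0 => w0; by rewrite -[v]hsubmxK -/z -/w z0 w0 row_mx0.
    apply: leq_trans (dH_le wC wn0) _; apply: subset_leq_card; apply/subsetP => j.
    by rewrite !inE => ->; rewrite orbT.

  apply: leq_trans (dH_le zC zn0') _; apply: subset_leq_card; apply/subsetP => j.
  by rewrite !inE => ->.
rewrite geq_min; apply/orP; right.
have zn0 : z != 0 by apply: contra_not_neq aln0 => z0; rewrite /al z0 mul0mx.
have d2z : (dH (edual Br) <= hwt z)%N by apply: dH_le zn0; rewrite /edual sub_kermx zBr.
have d2a : forall a : F, (dH (edual Br) <= hwt (w + a *: z))%N.
  move=> a; apply: dH_le.
    by rewrite /edual sub_kermx mulmxDl -scalemxAl zBr wBr scaler0 addr0.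
  apply/eqP => h; apply: aln0; apply: (noeig_row (noeig (- a))).
  rewrite -beta; have -> : w = - (a *: z) by apply/eqP; rewrite -addr_eq0 h.
  by rewrite mulNmx -scalemxAl scaleNr.
have S : ((q + 1) * dH (edual Br) <= q * swt v)%N.
  rewrite /swt -/z -/w -count_lemma mulnDl mul1n addnC; apply: leq_add => //.
  rewrite -sum_const_F; apply: leq_sum => a _; exact: d2a.
rewrite /ceil_div -ltnS ltn_divLR //.
nia.
Qed.
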